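(* For every $\delta\in\mathbb N$, there exist $\varepsilon > 0$ and a blowup $H$ of a 7-cycle with minimum degree at least $\delta$ such that $\sum_{v\in V(H)}1/(d(v) + \varepsilon) > 3$.
   Context: A blowup of a graph $F$ is a graph obtained from $F$ by replacing some vertices with cliques and replacing each edge by the complete bipartite graph between the corresponding vertex sets (i.e., vertices $x$ of $F$ are replaced by pairwise disjoint nonempty cliques $Q_x$, and for each edge $xy$ of $F$ every vertex of $Q_x$ is adjacent to every vertex of $Q_y$, with no other edges). $d(v)$ is the degree of $v$ in $H$. *)

(* Defs.v *)
From mathcomp Require Import all_boot all_order all_algebra.
From mathcomp Require Import reals.
Set Implicit Arguments. Unset Strict Implicit. Unset Printing Implicit Defensive.

Definition C7adj (x y : 'I_7) : bool :=
  ((x.+1 %% 7) == y) || ((y.+1 %% 7) == x).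

(* (T, e) is a blowup of C7 with blowup map f: vertex x of C7 is replaced by
   the nonempty clique Q_x = f^-1(x) (f surjective); two distinct vertices
   u, v of H are adjacent iff they lie in the same clique or in cliques
   Q_x, Q_y with xy an edge of C7. *)
Definition is_blowup_C7 (T : finType) (e : rel T) (f : T -> 'I_7) : Prop :=
  (forall x : 'I_7, exists v : T, f v = x) /\
  (forall u v : T, e u v = (u != v) && ((f u == f v) || C7adj (f u) (f v))).

Definition deg (T : finType) (e : rel T) (v : T) : nat := #|[set u | e v u]|.

(* Main.v *)
Require Import Defs.
From mathcomp Require Import all_boot all_order all_algebra.
From mathcomp Require Import reals.
From mathcomp Require Import ring lra zify.
Import Order.TTheory GRing.Theory Num.Theory.

Section S.
Variable N : nat.
Definition a (i : 'I_7) : nat := if (val i == 0) || (val i == 2) || (val i == 4) then N.+1 else 1.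
Definition adjeq (x i : 'I_7) : bool := (x == i) || C7adj x i.
Definition D (x : 'I_7) : nat := \sum_(i < 7) adjeq x i * a i.
Definition dv (x : 'I_7) : nat := if (val x == 1) || (val x == 3) then (N.+1).*2 else N.+2.

Lemma Dval x : (D x).-1 = dv x.
Proof.
rewrite /D !big_ord_recl big_ord0.
case: x => [[|[|[|[|[|[|[|k]]]]]]] Hk] //=; rewrite /adjeq /C7adj /a /dv /=; try lia.
Qed.
Definition T := {i : 'I_7 & 'I_(a i)}.
Definition eT : rel T := fun u v => (u != v) && ((tag u == tag v) || C7adj (tag u) (tag v)).

Lemma a_pos i : (0 < a i)%N.
Proof. by rewrite /a; case: ifP. Qed.

Lemma degE (v : T) : deg eT v = dv (tag v).
Proof.
rewrite -Dval /deg.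
have -> : [set u | eT v u] = [set u : T | adjeq (tag v) (tag u)] :\ v.
  apply/setP => u; rewrite !inE /eT /adjeq eq_sym; by [].
have Hv : v \in [set u : T | adjeq (tag v) (tag u)] by rewrite inE /adjeq eqxx.
rewrite -[X in _ = X.-1](_ : #|[set u : T | adjeq (tag v) (tag u)]| = D (tag v)).
  by rewrite [in RHS](cardsD1 v) Hv.
  idtac.
rewrite -sum1_card big_mkcond /=.
rewrite /D. under eq_bigr do rewrite inE.
have := @sig_big_dep nat 0 addn 'I_7 (fun i => 'I_(a i)) xpredT (fun _ _ => true)
   (fun i _ => if adjeq (tag v) i then 1 else 0)%N.
rewrite /= => <-.
apply: eq_bigr => i _; rewrite sum_nat_const card_ord.
by case: (adjeq _ _); rewrite ?muln1 ?mul1n ?muln0 ?mul0n.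
Qed.
End S.
Local Open Scope ring_scope.

Theorem proposition4p3 (R : realType) (delta : nat) :
  exists eps : R, 0 < eps /\
  exists (T : finType) (e : rel T) (f : T -> 'I_7),
    is_blowup_C7 e f /\
    (forall v : T, (delta <= deg e v)%N) /\
    3 < \sum_(v : T) 1 / ((deg e v)%:R + eps).
Proof.
set N := delta.
have n1 : (1 : R) <= (N.+1)%:R by rewrite ler1n.
exists ((4 * (N.+1)%:R)^-1); split.
  by rewrite invr_gt0 mulr_gt0 // ltr0n.
exists (T N), (@eT N), tag; split; [split|split].
- move=> x; exists (Tagged (fun i => 'I_(a N i)) (Ordinal (a_pos N x))); by [].
- by [].
- move=> v; rewrite degE /dv; case: ifP => _; lia.
set eps := (4 * (N.+1)%:R)^-1.
under eq_bigr do rewrite degE.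
have := @sig_big_dep R 0 +%R 'I_7 (fun i => 'I_(a N i)) xpredT (fun _ _ => true)
   (fun i _ => 1 / ((dv N i)%:R + eps)).
rewrite /= => <-.
under eq_bigr do rewrite sumr_const card_ord.
rewrite !big_ord_recl big_ord0 /= /a /dv /=.
rewrite !mulr1n addr0.
have E : (N.+2)%:R = (N.+1)%:R + 1 :> R by rewrite mulrS addrC.
rewrite E -muln2 natrM.
set n := (N.+1)%:R.
have n0 : n != 0 by rewrite /n pnatr_eq0.
have en : eps * n = 1/4 by rewrite /eps invfM -mulrA mulVf // mulr1 div1r.
have e0 : 0 < eps by rewrite /eps invr_gt0 mulr_gt0 // ltr0n.
set d1 := 1 / (n + 1 + eps).
set d2 := 1 / (n * 2%:R + eps).
rewrite -![d1 *+ _]mulr_natr -/n.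
have p0 : 0 < n + 1 + eps by lra.
have q0 : 0 < n * 2 + eps by lra.
have h1 : d1 * (n + 1 + eps) = 1 by rewrite /d1 div1r mulVf // gt_eqF.
have h2 : d2 * (n * 2 + eps) = 1 by rewrite /d2 div1r mulVf // gt_eqF.
have d1p : 0 < d1 by rewrite /d1 div1r invr_gt0.
have d2p : 0 < d2 by rewrite /d2 div1r invr_gt0.
have e4 : eps <= 1/4 by nra.
have k : (1 + 3 * eps) * d1 < 2 * d2.
  have k' : (1 + 3 * eps) * (n * 2 + eps) < 2 * (n + 1 + eps) by nra.
  nra.
nra.
Qed.
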